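(* Let $\mathcal V$ be a finite set, let $P_h$ and $\pi$ be probability distributions on $\mathcal V$, let $x^*\in\arg\max_{x\in\mathcal V}P_h(x)$, and let $q:=1-P_h(x^* )$. Then for every subset $A\subseteq\mathcal V$, $$\pi(A)-P_h(A)\le \max\bigl\{1-\pi(x^* ),\,q\bigr\},$$ and moreover $$1-\pi(x^* )\le \sup\Bigl\{\lambda\in[0,1]:\ d_{\mathrm{kl}}(\lambda\,\|\,q)\le D_{\mathrm{KL}}(\pi\,\|\,P_h)\Bigr\}.$$
   Context: $\pi(A)=\sum_{x\in A}\pi(x)$; $D_{\mathrm{KL}}(\pi\|P_h)=\sum_x \pi(x)\log\frac{\pi(x)}{P_h(x)}\in[0,+\infty]$. The binary KL divergence is $d_{\mathrm{kl}}(p\|q):=p\log\frac{p}{q}+(1-p)\log\frac{1-p}{1-q}$ for $p,q\in[0,1]$, with the conventions $0\log(0/q):=0$ for $q\in[0,1]$ (including $0\log(0/0)=0$) and $b\log(b/0):=+\infty$ for $b>0$. *)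

(* Defs.v *)
From HB Require Import structures.
From mathcomp Require Import all_boot all_order all_algebra.
From mathcomp Require Import all_classical all_reals all_analysis.
Set Implicit Arguments. Unset Strict Implicit. Unset Printing Implicit Defensive.
Import Order.TTheory GRing.Theory Num.Theory.
Local Open Scope ring_scope.

Definition is_distr (R : realType) (V : finType) (p : V -> R) : Prop :=
  (forall x, 0 <= p x) /\ \sum_(x : V) p x = 1.

Definition pmass (R : realType) (V : finType) (p : V -> R) (A : {set V}) : R :=
  \sum_(x in A) p x.

(* a log(a/b) with the conventions 0 log(0/b) = 0 (incl. b = 0),
   a log(a/0) = +oo for a > 0; natural logarithm. Values in \bar R. *)
Definition xlogxy (R : realType) (a b : R) : \bar R :=
  if a == 0 then 0%E
  else if b == 0 then +oo%E
  else (a * ln (a / b))%:E.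

Definition KL (R : realType) (V : finType) (pi P : V -> R) : \bar R :=
  (\sum_(x : V) xlogxy (pi x) (P x))%E.

Definition dkl (R : realType) (p q : R) : \bar R :=
  (xlogxy p q + xlogxy (1 - p) (1 - q))%E.

(* Main.v *)
Require Import Defs.
From HB Require Import structures.
From mathcomp Require Import all_boot all_order all_algebra.
From mathcomp Require Import all_classical all_reals all_analysis.
From mathcomp Require Import ring lra.
Import Order.TTheory GRing.Theory Num.Theory.
Local Open Scope ring_scope.

Lemma xlogxy_ninfty (R : realType) (a b : R) : xlogxy a b != -oo%E.
Proof. by rewrite /xlogxy; case: ifP => //; case: ifP. Qed.

Lemma term_bound (R : realType) (ai bi A B : R) :
  0 <= ai -> 0 <= bi -> 0 < A -> 0 < B ->
  ((ai * ln (A / B) + ai - bi * (A / B))%:E <= xlogxy ai bi)%E.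
Proof.
move=> ha hb hA hB; rewrite /xlogxy.
have [->|ai0] := eqVneq ai 0.
  rewrite lee_fin mul0r add0r sub0r oppr_le0; apply: mulr_ge0 => //.
  by apply: divr_ge0; apply: ltW.
have [->|bi0] := eqVneq bi 0; first exact: leey.
have hai : 0 < ai by rewrite lt_def ai0.
have hbi : 0 < bi by rewrite lt_def bi0.
rewrite lee_fin.
have hAB : 0 < A / B by apply: divr_gt0.
have habi : 0 < ai / bi by apply: divr_gt0.
set t := (A / B) / (ai / bi).
have ht : 0 < t by apply: divr_gt0.
have lnt : ln t <= t - 1.
  have := @le_ln1Dx R (t - 1); rewrite addrCA subrr addr0; apply; lra.
have e : ln t = ln (A / B) - ln (ai / bi) by rewrite /t ln_div.
have et : ai * t = bi * (A / B).
  by rewrite /t; field; rewrite bi0 ai0 gt_eqF.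
have : ai * ln t <= ai * (t - 1) by rewrite ler_wpM2l // ltW.
rewrite e mulrBr mulrBr mulr1 et; lra.

Qed.

Lemma logsum (R : realType) (V : finType) (a b : V -> R) (P : pred V) :
  (forall x, 0 <= a x) -> (forall x, 0 <= b x) ->
  (xlogxy (\sum_(x | P x) a x) (\sum_(x | P x) b x)
     <= \sum_(x | P x) xlogxy (a x) (b x))%E.
Proof.
move=> ha hb.
set A := \sum_(x | P x) a x; set B := \sum_(x | P x) b x.
have A0 : 0 <= A by apply: sumr_ge0.
have B0 : 0 <= B by apply: sumr_ge0.
have [eA|nA] := eqVneq A 0.
  rewrite {1}/xlogxy eA eqxx; apply: sume_ge0 => x Px.
  have /psumr_eq0P h := eA; rewrite /xlogxy h ?eqxx //.
have hA : 0 < A by rewrite lt_def nA.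
have [eB|nB] := eqVneq B 0.
  have hbz : forall x, P x -> b x = 0 by apply/psumr_eq0P.
  have /existsP [x /andP[Px ax]] : [exists x, P x && (a x != 0)].
    apply: contraT => /existsPn hn; rewrite -(negbTE nA); apply/eqP.
    by rewrite /A big1 // => x Px; have := hn x; rewrite Px /= negbK => /eqP.
  have -> : (\sum_(x | P x) xlogxy (a x) (b x) = +oo)%E.
    apply/eqP; rewrite esum_eqy; last by move=> *; apply: xlogxy_ninfty.
    by apply/existsP; exists x; rewrite /xlogxy (negbTE ax) hbz // eqxx andbT.
  exact: leey.
have hB : 0 < B by rewrite lt_def nB.
have H := @lee_sum R V _ (fun x => xlogxy (a x) (b x)) (index_enum V) P (fun x _ => @term_bound R _ _ _ _ (ha x) (hb x) hA hB).
apply: (le_trans _ H).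
rewrite sumEFin /xlogxy (negbTE nA) (negbTE nB) lee_fin.
rewrite !big_split /= -!mulr_suml -/A sumrN -mulr_suml -/B.
by rewrite mulrCA divff // mulr1 addrK.
Qed.

Lemma le_single (R : realType) (V : finType) (p : V -> R) (A : {set V}) y :
  (forall x, 0 <= p x) -> y \in A -> p y <= \sum_(x in A) p x.
Proof. by move=> hp yA; rewrite (bigD1 y) //= lerDl; apply: sumr_ge0. Qed.

Lemma split_tot (R : realType) (V : finType) (p : V -> R) (A : {set V}) :
  \sum_x p x = \sum_(x in A) p x + \sum_(x in ~: A) p x.
Proof.
rewrite (bigID (mem A)) /=; congr (_ + _); apply: eq_bigl => x; by rewrite inE.
Qed.

Theorem mainTheorem2 (R : realType) (V : finType) (Ph pi : V -> R) (xs : V) :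
  is_distr Ph -> is_distr pi ->
  (forall x : V, Ph x <= Ph xs) ->
  (forall A : {set V},
      pmass pi A - pmass Ph A <= Num.max (1 - pi xs) (1 - Ph xs)) /\
  ((1 - pi xs)%:E <=
     ereal_sup [set l%:E | l in
                  [set l : R | (0 <= l <= 1)%R /\ (dkl l (1 - Ph xs) <= KL pi Ph)%E]])%E.
Proof.
move=> [hP sP] [hp sp] hmax.
have Sp : \sum_(x | x != xs) pi x = 1 - pi xs.
  by move: sp; rewrite (bigD1 xs) //=; lra.
have SP : \sum_(x | x != xs) Ph x = 1 - Ph xs.
  by move: sP; rewrite (bigD1 xs) //=; lra.
have Sp0 : 0 <= \sum_(x | x != xs) pi x by apply: sumr_ge0.
split.
  move=> A; rewrite /pmass.
  have hpA := @split_tot R V pi A; have hPA := @split_tot R V Ph A.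
  have hpc : 0 <= \sum_(x in ~: A) pi x by apply: sumr_ge0.
  have hPc : 0 <= \sum_(x in ~: A) Ph x by apply: sumr_ge0.
  have hPA0 : 0 <= \sum_(x in A) Ph x by apply: sumr_ge0.
  case: (boolP (xs \in A)) => xA.
    have := @le_single R V Ph A xs hP xA => h.
    rewrite le_max; apply/orP; right; lra.
  have xA' : xs \in ~: A by rewrite inE.
  have := @le_single R V pi (~: A) xs hp xA' => h.
  rewrite le_max; apply/orP; left; lra.
apply: ereal_sup_ubound; exists (1 - pi xs) => //; split.
  have := hp xs => hx; apply/andP; split; lra.
rewrite /dkl /KL (bigD1 xs) //= addeC subKr subKr; apply: leeD => //.
by rewrite -Sp -SP; apply: logsum.
Qed.
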